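(* For every integer $k\ge 1$, the triangulane $T_k$ satisfies $$SO(T_k)=\big(36(2^{k-1}-1)+6\cdot 2^{k-1}+12\big)\sqrt{2}+6\cdot 2^k\sqrt{5}.$$
   Context: For a finite simple graph $G$, $SO(G)=\sum_{uv\in E(G)}\sqrt{d_u^2+d_v^2}$, where $d_u$ is the degree of $u$ in $G$ (the Sombor index). The circuit of pairwise disjoint graphs $H_1,H_2,H_3$ with respect to vertices $z_i\in V(H_i)$ is obtained from their disjoint union and a triangle $C_3$ with vertices $c_1,c_2,c_3$ by identifying $z_i$ with $c_i$ for each $i$. Define rooted graphs $G_k$ recursively: $G_1$ is a triangle with a distinguished vertex $y_1$; for $k\ge 2$, $G_k$ is the circuit of two disjoint copies of $G_{k-1}$ (with respect to their vertices $y_{k-1}$) and $K_1$ (with respect to its single vertex), and $y_k$ is the vertex where $K_1$ was placed. The triangulane $T_k$ is the circuit of three disjoint copies of $G_k$ with respect to their vertices $y_k$. *)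

(* Defs.v *)
From HB Require Import structures.
From mathcomp Require Import all_boot all_order all_algebra.
Set Implicit Arguments. Unset Strict Implicit. Unset Printing Implicit Defensive.
Import Order.TTheory GRing.Theory Num.Theory.

(* A finite simple graph: a finite vertex type with an adjacency relation
   (the constructions below only produce symmetric irreflexive relations). *)
Record graph := Graph { vert : finType; adj : rel vert }.

Record rgraph := RGraph { rg : graph; root : vert rg }.

Definition deg (G : graph) (u : vert G) : nat := #|[set v | adj u v]|.

Definition edges (G : graph) : {set {set vert G}} :=
  [set [set u; v] | u in vert G, v in vert G & adj u v].

Local Open Scope ring_scope.

Definition sombor (R : rcfType) (G : graph) : R :=
  \sum_(e in edges G) Num.sqrt (\sum_(x in e) ((deg x)%:R ^+ 2)).

Local Close Scope ring_scope.

(* The circuit of H1, H2, H3 w.r.t. z1, z2, z3: the disjoint union of the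
   H_i together with a triangle c1 c2 c3 where c_i is identified with z_i,
   i.e. the disjoint union plus the three edges z1z2, z2z3, z1z3. *)
Definition circuit (H1 H2 H3 : graph) (z1 : vert H1) (z2 : vert H2)
    (z3 : vert H3) : graph :=
  let V := ((vert H1 + vert H2) + vert H3)%type in
  let c : seq V := [:: inl (inl z1); inl (inr z2); inr z3] in
  @Graph V (fun x y =>
    match x, y with
    | inl (inl a), inl (inl b) => adj a b
    | inl (inr a), inl (inr b) => adj a b
    | inr a, inr b => adj a b
    | _, _ => false
    end || [&& x != y, x \in c & y \in c]).

Definition triangle : graph := @Graph 'I_3 (fun u v => u != v).
Definition K1 : graph := @Graph unit (fun _ _ => false).

(* G k for k >= 1 (G 0 is an unused junk value equal to G 1). *)
Fixpoint Gk (k : nat) : rgraph :=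
  match k with
  | 0 => @RGraph triangle ord0
  | S k' =>
      match k' with
      | 0 => @RGraph triangle ord0
      | _ => let H := Gk k' in
             @RGraph (circuit (root H) (root H) (tt : vert K1))
                     (inr tt)
      end
  end.

Definition Tk (k : nat) : graph :=
  let H := Gk k in circuit (root H) (root H) (root H).

(* Main.v *)
Set Warnings "-notation-overridden,-ambiguous-paths".
Require Import Defs.
From mathcomp Require Import all_boot all_order all_algebra ring zify.
Import Order.TTheory GRing.Theory Num.Theory.

Section Half.
Variable R : rcfType.
Local Open Scope ring_scope.

Definition Q (G : graph) (w : vert G -> nat) : R :=
  \sum_u \sum_v (if adj u v then Num.sqrt ((w u)%:R ^+ 2 + (w v)%:R ^+ 2) else 0).

Lemma set2_eqE (T : finType) (u v u0 v0 : T) : u0 != v0 ->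
  ([set u; v] == [set u0; v0]) = ((u, v) == (u0, v0)) || ((u, v) == (v0, u0)).
Proof.
move=> ne; apply/eqP/idP => [E|].
  have h1: u0 \in [set u; v] by rewrite E set21.
  have h2: v0 \in [set u; v] by rewrite E set22.
  have h3: u \in [set u0; v0] by rewrite -E set21.
  have h4: v \in [set u0; v0] by rewrite -E set22.
  rewrite !inE in h1 h2 h3 h4.
  case/orP: h1 => /eqP h1; case/orP: h2 => /eqP h2; subst;
    rewrite ?eqxx in ne; rewrite ?eqxx /= ?orbT //.
  all: try by case/orP: h4 => /eqP h4; subst; rewrite ?eqxx in ne.
  all: try by case/orP: h3 => /eqP h3; subst; rewrite ?eqxx in ne.
by case/orP => /eqP [-> ->] //; rewrite setUC.
Qed.

Lemma sombor_Q (G : graph) :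
  (forall u v : vert G, adj u v = adj v u) -> (forall u : vert G, adj u u = false) ->
  sombor R G *+ 2 = @Q G (@deg G).
Proof.
move=> sym irr.
rewrite /Q.
under eq_bigr do rewrite -big_mkcond.
rewrite (pair_big_dep (fun _ => true) (fun u v => adj u v)) /=.
rewrite (partition_big (fun q => [set q.1; q.2]) (mem (edges G))) /=; last first.
  by move=> [u v] /= h; apply/imset2P; exists u v => //; rewrite inE.
rewrite /sombor -sumrMnl; apply: eq_bigr => e /imset2P [u0 v0 _].
rewrite inE /= => a0 ->.
have ne0 : u0 != v0 by apply: contraTneq a0 => ->; rewrite irr.
have Fp : forall u v : vert G, u != v ->
   \sum_(x in [set u; v]) ((deg x)%:R ^+ 2 : R) = (deg u)%:R ^+ 2 + (deg v)%:R ^+ 2.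
  by move=> u v ne; rewrite big_setU1 ?big_set1 // inE.
symmetry.
transitivity (\sum_(q : vert G * vert G | (q == (u0, v0)) || (q == (v0, u0)))
   Num.sqrt (\sum_(x in [set u0; v0]) ((deg x)%:R ^+ 2 : R))).
  apply: eq_big => [[u v]|[u v]] /=.
    rewrite set2_eqE //; apply/andP/idP => [[]//|/orP[]/eqP[-> ->]].
      by rewrite a0 eqxx.
    by rewrite sym a0 eqxx orbT.
  case/andP=> a1; rewrite set2_eqE // => /orP[]/eqP[-> ->]; rewrite Fp //.
  by rewrite addrC.
rewrite sumr_const; congr (_ *+ _).
have ne2 : (u0, v0) != (v0, u0) by apply: contra ne0 => /eqP [->].
have -> : (2 = #|[set (u0,v0); (v0,u0)]|)%N by rewrite cards2 ne2.
by apply: eq_card => q; rewrite !inE.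
Qed.
End Half.

Lemma eq_ll (A B : eqType) (x y : A) : (inl x == inl y :> A + B) = (x == y).
Proof. by apply/eqP/eqP => [[]|->]. Qed.
Lemma eq_rr (A B : eqType) (x y : B) : (inr x == inr y :> A + B) = (x == y).
Proof. by apply/eqP/eqP => [[]|->]. Qed.
Lemma eq_lr (A B : eqType) (x : A) (y : B) : (inl x == inr y :> A + B) = false.
Proof. by []. Qed.
Lemma eq_rl (A B : eqType) (x : B) (y : A) : (inr x == inl y :> A + B) = false.
Proof. by []. Qed.
Definition eqsE := (eq_ll, eq_rr, eq_lr, eq_rl).

Section Circ.
Variables (H1 H2 H3 : graph) (z1 : vert H1) (z2 : vert H2) (z3 : vert H3).
Notation C := (circuit z1 z2 z3).

Ltac adjt := rewrite /= !inE /= !eqsE /= ?orbF ?andbT //;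
  try (case: eqP => [->|]; rewrite ?andbF ?orbF //; by case: eqP => [->|]; rewrite ?andbF ?orbF ?eqxx).

Lemma adj11 a b : @adj C (inl (inl a)) (inl (inl b)) = adj a b.
Proof. adjt; apply/orP/idP => [[//|/and3P[ne /eqP e1 /eqP e2]]|?]; [by rewrite e1 e2 eqxx in ne|by left].
Qed.
Lemma adj12 a b : @adj C (inl (inl a)) (inl (inr b)) = (a == z1) && (b == z2).
Proof. adjt. Qed.
Lemma adj13 a b : @adj C (inl (inl a)) (inr b) = (a == z1) && (b == z3).
Proof. adjt. Qed.
Lemma adj21 a b : @adj C (inl (inr a)) (inl (inl b)) = (a == z2) && (b == z1).
Proof. adjt. Qed.
Lemma adj22 a b : @adj C (inl (inr a)) (inl (inr b)) = adj a b.
Proof. adjt; apply/orP/idP => [[//|/and3P[ne /eqP e1 /eqP e2]]|?]; [by rewrite e1 e2 eqxx in ne|by left].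
Qed.
Lemma adj23 a b : @adj C (inl (inr a)) (inr b) = (a == z2) && (b == z3).
Proof. adjt. Qed.
Lemma adj31 a b : @adj C (inr a) (inl (inl b)) = (a == z3) && (b == z1).
Proof. adjt. Qed.
Lemma adj32 a b : @adj C (inr a) (inl (inr b)) = (a == z3) && (b == z2).
Proof. adjt. Qed.
Lemma adj33 a b : @adj C (inr a) (inr b) = adj a b.
Proof. adjt; apply/orP/idP => [[//|/and3P[ne /eqP e1 /eqP e2]]|?]; [by rewrite e1 e2 eqxx in ne|by left].
Qed.

Lemma deg_sum (G : graph) (u : vert G) : deg u = (\sum_v (adj u v : nat))%N.
Proof.
rewrite /deg -sum1_card big_mkcond /=; apply: eq_bigr => v _; rewrite inE.
by case: adj.
Qed.

Lemma sum_pick (T : finType) (z : T) (c : bool) : (\sum_b ((c && (b == z)) : nat))%N = c.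
Proof.
rewrite (bigD1 z) //= eqxx andbT big1 ?addn0 // => b /negbTE ->.
by rewrite andbF.
Qed.

Lemma sumn_sum (I1 I2 : finType) (F : I1 + I2 -> nat) :
  (\sum_i F i = \sum_i F (inl i) + \sum_i F (inr i))%N.
Proof. by rewrite big_sumType. Qed.
Lemma deg1 a : @deg C (inl (inl a)) = (deg a + 2 * (a == z1))%N.
Proof.
rewrite !deg_sum !sumn_sum.
under [X in (X + _ + _)%N = _]eq_bigr do rewrite adj11.
under [X in (_ + X + _)%N = _]eq_bigr do rewrite adj12.
under [X in (_ + X)%N = _]eq_bigr do rewrite adj13.
rewrite !sum_pick; case: (a == z1); rewrite /=; ring.
Qed.
Lemma deg2 a : @deg C (inl (inr a)) = (deg a + 2 * (a == z2))%N.
Proof.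
rewrite !deg_sum !sumn_sum.
under [X in (X + _ + _)%N = _]eq_bigr do rewrite adj21.
under [X in (_ + X + _)%N = _]eq_bigr do rewrite adj22.
under [X in (_ + X)%N = _]eq_bigr do rewrite adj23.
rewrite !sum_pick; case: (a == z2); rewrite ?addn0 /=; ring.
Qed.
Lemma deg3 a : @deg C (inr a) = (deg a + 2 * (a == z3))%N.
Proof.
rewrite !deg_sum !sumn_sum.
under [X in (X + _ + _)%N = _]eq_bigr do rewrite adj31.
under [X in (_ + X + _)%N = _]eq_bigr do rewrite adj32.
under [X in (_ + X)%N = _]eq_bigr do rewrite adj33.
rewrite !sum_pick; case: (a == z3); rewrite ?addn0 /=; ring.
Qed.

Lemma circ_sym : (forall u v : vert H1, adj u v = adj v u) ->
  (forall u v : vert H2, adj u v = adj v u) -> (forall u v : vert H3, adj u v = adj v u) ->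
  forall u v : vert C, adj u v = adj v u.
Proof.
move=> s1 s2 s3 [[a|a]|a] [[b|b]|b];
 rewrite ?adj11 ?adj12 ?adj13 ?adj21 ?adj22 ?adj23 ?adj31 ?adj32 ?adj33;
 by [apply: s1|apply: s2|apply: s3|rewrite andbC].
Qed.
Lemma circ_irr : (forall u : vert H1, adj u u = false) ->
  (forall u : vert H2, adj u u = false) -> (forall u : vert H3, adj u u = false) ->
  forall u : vert C, adj u u = false.
Proof.
by move=> s1 s2 s3 [[a|a]|a]; rewrite ?adj11 ?adj22 ?adj33.
Qed.

Variable R : rcfType.
Local Open Scope ring_scope.
Lemma sumr_sum (I1 I2 : finType) (F : I1 + I2 -> R) :
  \sum_i F i = \sum_i F (inl i) + \sum_i F (inr i).
Proof. by rewrite big_sumType. Qed.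

Lemma sumr_split (I : finType) (F G : I -> R) :
  \sum_i (F i + G i) = \sum_i F i + \sum_i G i.
Proof. by rewrite big_split. Qed.
Lemma pick2 (A B : finType) (a0 : A) (b0 : B) (G : A -> B -> R) :
  \sum_i \sum_j (if (i == a0) && (j == b0) then G i j else 0) = G a0 b0.
Proof.
rewrite (bigD1 a0) //= eqxx /= (bigD1 b0) //= eqxx big1 => [|j /negbTE -> //].
rewrite addr0 big1 ?addr0 // => i /negbTE -> /=; exact: big1.
Qed.

Variable w : vert C -> nat.
Definition sc (x y : vert C) : R := Num.sqrt ((w x)%:R ^+ 2 + (w y)%:R ^+ 2).
Lemma scC x y : sc x y = sc y x. Proof. by rewrite /sc addrC. Qed.
Lemma blk11 : \sum_i \sum_j (if @adj C (inl (inl i)) (inl (inl j)) then sc (inl (inl i)) (inl (inl j)) else 0) = \sum_i \sum_j (if adj i j then sc (inl (inl i)) (inl (inl j)) else 0).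
Proof. by apply: eq_bigr => i _; apply: eq_bigr => j _; rewrite adj11. Qed.
Lemma blk12 : \sum_i \sum_j (if @adj C (inl (inl i)) (inl (inr j)) then sc (inl (inl i)) (inl (inr j)) else 0) = \sum_i \sum_j (if (i == z1) && (j == z2) then sc (inl (inl i)) (inl (inr j)) else 0).
Proof. by apply: eq_bigr => i _; apply: eq_bigr => j _; rewrite adj12. Qed.
Lemma blk13 : \sum_i \sum_j (if @adj C (inl (inl i)) (inr j) then sc (inl (inl i)) (inr j) else 0) = \sum_i \sum_j (if (i == z1) && (j == z3) then sc (inl (inl i)) (inr j) else 0).
Proof. by apply: eq_bigr => i _; apply: eq_bigr => j _; rewrite adj13. Qed.
Lemma blk21 : \sum_i \sum_j (if @adj C (inl (inr i)) (inl (inl j)) then sc (inl (inr i)) (inl (inl j)) else 0) = \sum_i \sum_j (if (i == z2) && (j == z1) then sc (inl (inr i)) (inl (inl j)) else 0).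
Proof. by apply: eq_bigr => i _; apply: eq_bigr => j _; rewrite adj21. Qed.
Lemma blk22 : \sum_i \sum_j (if @adj C (inl (inr i)) (inl (inr j)) then sc (inl (inr i)) (inl (inr j)) else 0) = \sum_i \sum_j (if adj i j then sc (inl (inr i)) (inl (inr j)) else 0).
Proof. by apply: eq_bigr => i _; apply: eq_bigr => j _; rewrite adj22. Qed.
Lemma blk23 : \sum_i \sum_j (if @adj C (inl (inr i)) (inr j) then sc (inl (inr i)) (inr j) else 0) = \sum_i \sum_j (if (i == z2) && (j == z3) then sc (inl (inr i)) (inr j) else 0).
Proof. by apply: eq_bigr => i _; apply: eq_bigr => j _; rewrite adj23. Qed.
Lemma blk31 : \sum_i \sum_j (if @adj C (inr i) (inl (inl j)) then sc (inr i) (inl (inl j)) else 0) = \sum_i \sum_j (if (i == z3) && (j == z1) then sc (inr i) (inl (inl j)) else 0).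
Proof. by apply: eq_bigr => i _; apply: eq_bigr => j _; rewrite adj31. Qed.
Lemma blk32 : \sum_i \sum_j (if @adj C (inr i) (inl (inr j)) then sc (inr i) (inl (inr j)) else 0) = \sum_i \sum_j (if (i == z3) && (j == z2) then sc (inr i) (inl (inr j)) else 0).
Proof. by apply: eq_bigr => i _; apply: eq_bigr => j _; rewrite adj32. Qed.
Lemma blk33 : \sum_i \sum_j (if @adj C (inr i) (inr j) then sc (inr i) (inr j) else 0) = \sum_i \sum_j (if adj i j then sc (inr i) (inr j) else 0).
Proof. by apply: eq_bigr => i _; apply: eq_bigr => j _; rewrite adj33. Qed.

Lemma Q_circ : Q R C w = Q R H1 (fun a => w (inl (inl a))) + Q R H2 (fun a => w (inl (inr a)))
  + Q R H3 (fun a => w (inr a)) +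
  (sc (inl (inl z1)) (inl (inr z2)) + sc (inl (inl z1)) (inr z3) + sc (inl (inr z2)) (inr z3)) *+ 2.
Proof.
rewrite /Q sumr_sum sumr_sum.
under [X in X + _ + _ = _]eq_bigr => i _ do rewrite !sumr_sum.
under [X in _ + X + _ = _]eq_bigr => i _ do rewrite !sumr_sum.
under [X in _ + X = _]eq_bigr => i _ do rewrite !sumr_sum.
rewrite !sumr_split.
rewrite blk11 blk12 blk13 blk21 blk22 blk23 blk31 blk32 blk33 !pick2.
rewrite (scC (inl (inr z2))) (scC (inr z3)) (scC (inr z3)).
ring.
Qed.
End Circ.
Local Open Scope ring_scope.

Lemma Q_ext (R : rcfType) (G : graph) (w1 w2 : vert G -> nat) :
  w1 =1 w2 -> Q R G w1 = Q R G w2.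
Proof. by move=> e; rewrite /Q; apply: eq_bigr => u _; apply: eq_bigr => v _; rewrite !e. Qed.

Lemma Q_K1 (R : rcfType) w : Q R K1 w = 0.
Proof. by rewrite /Q big1 // => u _; rewrite big1. Qed.

Lemma degtri (u : 'I_3) : @deg triangle u = 2%N.
Proof. case: u => [[|[|[|//]]] p]; rewrite deg_sum !big_ord_recl big_ord0 /=; by []. Qed.
Lemma degK : @deg K1 tt = 0%N.
Proof. by rewrite deg_sum big1. Qed.

Definition F (R : rcfType) (H : Defs.rgraph) : R :=
  Q R (rg H) (fun a => (deg a + 2 * (a == Defs.root H))%N).

Lemma sqrt_sqM (R : rcfType) (a : nat) (b : R) : 0 <= b ->
  Num.sqrt (a%:R ^+ 2 * b) = a%:R * Num.sqrt b.
Proof. by move=> hb; rewrite sqrtrM ?sqr_ge0 // sqrtr_sqr ger0_norm. Qed.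

Lemma s44 (R : rcfType) : Num.sqrt ((4%N)%:R ^+ 2 + (4%N)%:R ^+ 2 : R) = 4%:R * Num.sqrt 2.
Proof.
rewrite (_ : (4%N)%:R ^+ 2 + (4%N)%:R ^+ 2 = (4%N)%:R ^+ 2 * (2 : R)); last by ring.
by rewrite sqrt_sqM.
Qed.

Lemma s44' (R : rcfType) (a b : nat) : a = 4%N -> b = 4%N ->
  Num.sqrt (a%:R ^+ 2 + b%:R ^+ 2 : R) = 4%:R * Num.sqrt 2.
Proof. by move=> -> ->; apply: s44. Qed.

Section Step.
Variable R : rcfType.
Variable H : Defs.rgraph.
Hypothesis sym : forall u v : vert (rg H), adj u v = adj v u.
Hypothesis irr : forall u : vert (rg H), adj u u = false.
Hypothesis d2 : deg (Defs.root H) = 2%N.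
Definition H' := @RGraph (circuit (Defs.root H) (Defs.root H) (tt : vert K1)) (inr tt).

Lemma step_sym : forall u v : vert (rg H'), adj u v = adj v u.
Proof. by apply: circ_sym. Qed.
Lemma step_irr : forall u : vert (rg H'), adj u u = false.
Proof. by apply: circ_irr. Qed.
Lemma step_d2 : deg (Defs.root H') = 2%N.
Proof. by rewrite /= deg3 degK eqxx. Qed.
Lemma step_F : F R H' = F R H *+ 2 + (4%:R * Num.sqrt 2) *+ 6.
Proof.
rewrite /F Q_circ Q_K1 /sc /=.
rewrite (@Q_ext _ _ _ (fun a => (deg a + 2 * (a == Defs.root H))%N)); last first.
  by move=> a; rewrite deg1 muln0 addn0.
rewrite (@Q_ext _ _ (fun a => _) (fun a => (deg a + 2 * (a == Defs.root H))%N)); last first.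
  by move=> a; rewrite deg2 muln0 addn0.
rewrite !deg1 !deg2 !deg3 degK d2 !eqxx /= !s44' //.
rewrite mulr2n; ring.
Qed.
End Step.

Lemma sqab (R : rcfType) (a b c m : nat) : (a ^ 2 + b ^ 2 == c ^ 2 * m)%N ->
  Num.sqrt (a%:R ^+ 2 + b%:R ^+ 2 : R) = c%:R * Num.sqrt (m%:R).
Proof.
move=> /eqP e; rewrite -!natrX -natrD e natrM natrX.
by rewrite sqrt_sqM ?ler0n.
Qed.

Definition G1 := @RGraph triangle ord0.

Lemma F_G1 (R : rcfType) : F R G1 = 8%:R * Num.sqrt 5 + 4%:R * Num.sqrt 2.
Proof.
rewrite /F /Q /= !big_ord_recl !big_ord0 /= !degtri.
rewrite !(@sqab R 4 2 2 5) // !(@sqab R 2 4 2 5) // !(@sqab R 2 2 2 2) //.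
ring.
Qed.

Definition Vn (R : rcfType) (n : nat) : R :=
  (2 ^ (n + 3))%N%:R * Num.sqrt 5 + ((28 * 2 ^ n)%N%:R - 24) * Num.sqrt 2.

Lemma Gk_prop (R : rcfType) (n : nat) :
  [/\ forall u v : vert (rg (Gk n.+1)), adj u v = adj v u,
      forall u : vert (rg (Gk n.+1)), adj u u = false,
      deg (Defs.root (Gk n.+1)) = 2%N &
      F R (Gk n.+1) = Vn R n].
Proof.
elim: n => [|n [s i d f]].
  split.
  - by move=> u v; rewrite /= eq_sym.
  - by move=> u; rewrite /= eqxx.
  - exact: degtri.
  - rewrite (F_G1 R) /Vn expn0 muln1 /=; ring.
have -> : Gk n.+2 = H' (Gk n.+1) by [].
split.
- exact: step_sym.
- exact: step_irr.
- exact: step_d2.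
- rewrite step_F // f /Vn.
  rewrite !natrM !natrX addSn !exprS; ring.
Qed.


Theorem mainTheorem11 (R : rcfType) (k : nat) : (1 <= k)%N ->
  sombor R (Tk k) =
    (36 * (2 ^ (k - 1) - 1) + 6 * 2 ^ (k - 1) + 12)%N%:R * Num.sqrt 2
    + (6 * 2 ^ k)%N%:R * Num.sqrt 5.
Proof.
case: k => [//|n] _.
have [s i d f] := Gk_prop R n.
have -> : Tk n.+1 = circuit (Defs.root (Gk n.+1)) (Defs.root (Gk n.+1)) (Defs.root (Gk n.+1)) by [].
set r := Defs.root (Gk n.+1).
have E := @sombor_Q R (circuit r r r) (circ_sym _ _ _ r r r s s s) (circ_irr _ _ _ r r r i i i).
rewrite /r Q_circ in E.
rewrite (@Q_ext _ _ _ (fun a => (deg a + 2 * (a == Defs.root (Gk n.+1)))%N)) in E; last first.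
  by move=> a; rewrite deg1.
rewrite (@Q_ext _ _ (fun a => _) (fun a => (deg a + 2 * (a == Defs.root (Gk n.+1)))%N)) in E; last first.
  by move=> a; rewrite deg2.
rewrite (@Q_ext _ _ (fun a => _) (fun a => (deg a + 2 * (a == Defs.root (Gk n.+1)))%N)) in E; last first.
  by move=> a; rewrite deg3.
rewrite /sc !deg1 !deg2 !deg3 d !eqxx !s44' // in E.
have -> : sombor R
    (circuit (Defs.root (Gk n.+1)) (Defs.root (Gk n.+1)) (Defs.root (Gk n.+1)))
  = (sombor R (circuit (Defs.root (Gk n.+1)) (Defs.root (Gk n.+1)) (Defs.root (Gk n.+1))) *+ 2) / 2.
  by rewrite mulr2n; field.
have -> : (n.+1 - 1 = n)%N by rewrite subn1.
rewrite E -/(F R (Gk n.+1)) f /Vn expnD (expnS 2 n).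
have [m hm] : exists m, (2 ^ n = m.+1)%N.
  by exists (2 ^ n).-1; rewrite prednK ?expn_gt0.
rewrite hm subn1 /=.
by field.
Qed.
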